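(* Let $G$ be a graph, let $R$ be a general position set of $G$, and let $v\in R$. Then $|R|\le \mathrm{ip}(v,G)+1$. In particular, if $v$ is a gp-vertex of $G$, then $\mathrm{gp}(G)\le \mathrm{ip}(v,G)+1$.
   Context: All graphs are finite, simple and connected. A geodesic is a shortest path. A set $S$ of vertices is a general position set of $G$ if no three vertices of $S$ lie on a common geodesic of $G$; $\mathrm{gp}(G)$ is the maximum cardinality of a general position set, and a general position set of that cardinality is a gp-set. A gp-vertex of $G$ is a vertex lying in at least one gp-set of $G$. For $v\in V(G)$, $\mathrm{ip}(v,G)$ is the minimum number of geodesics of $G$, each having $v$ as an end-vertex, whose vertex sets together cover $V(G)$. *)

(* Defs.v *)
From mathcomp Require Import all_boot.
From mathcomp Require Import boolp.

Set Implicit Arguments.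
Unset Strict Implicit.
Unset Printing Implicit Defensive.

Definition simple_connected_graph (T : finType) (e : rel T) : Prop :=
  [/\ symmetric e, irreflexive e & forall x y : T, connect e x y].

Definition geodesic (T : finType) (e : rel T) (s : seq T) : Prop :=
  match s with
  | [::] => False
  | x :: p => path e x p /\
      forall q : seq T, path e x q -> last x q = last x p -> size p <= size q
  end.

Definition end_vertex (T : eqType) (v : T) (s : seq T) : Prop :=
  match s with
  | [::] => False
  | x :: p => x = v \/ last x p = v
  end.

Definition gp_set_prop (T : finType) (e : rel T) (S : {set T}) : Prop :=
  forall u v w : T, u \in S -> v \in S -> w \in S ->
    u != v -> v != w -> u != w ->
    ~ (exists s : seq T, geodesic e s /\ u \in s /\ v \in s /\ w \in s).

Definition gp_number (T : finType) (e : rel T) : nat :=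
  \max_(S : {set T} | `[< gp_set_prop e S >]) #|S|.

Definition is_gp_set (T : finType) (e : rel T) (S : {set T}) : Prop :=
  gp_set_prop e S /\ #|S| = gp_number e.

Definition gp_vertex (T : finType) (e : rel T) (v : T) : Prop :=
  exists S : {set T}, is_gp_set e S /\ v \in S.

Definition ip_cover (T : finType) (e : rel T) (v : T) (k : nat) : Prop :=
  exists gs : seq (seq T), size gs = k /\
    (forall g, g \in gs -> geodesic e g /\ end_vertex v g) /\
    (forall x : T, exists2 g, g \in gs & x \in g).

(* ip(v,G): the minimum such k (0 by convention if no such cover exists,
   which cannot happen for connected graphs). *)
Definition ip_number (T : finType) (e : rel T) (v : T) : nat :=
  match pselect (exists k, ip_cover e v k) with
  | left h =>
      @ex_minn (fun k => `[< ip_cover e v k >])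
        (let: ex_intro k hk := h in ex_intro _ k (asboolT hk))
  | right _ => 0
  end.

(* Main.v *)
Require Import Defs.
From mathcomp Require Import all_boot.
From mathcomp Require Import boolp.

Set Implicit Arguments.
Unset Strict Implicit.
Unset Printing Implicit Defensive.

Lemma geo_exists (T : finType) (e : rel T) (v x : T) :
  connect e v x -> exists g, geodesic e g /\ end_vertex v g /\ x \in g.
Proof.
move=> /connectP Hc.
have ex : exists n, `[< exists q, [/\ path e v q, last v q = x & size q = n] >].
  case: Hc => p pp lp; exists (size p); apply/asboolP; exists p; split=> //.
case: (ex_minnP ex) => n /asboolP [q [pq lq sq]] Hmin.
exists (v :: q); split; [split=> // q' pq' lq'|split; [by left|]].
  rewrite sq; apply: Hmin; apply/asboolP; exists q'; split=> //; by rewrite lq' lq.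
by rewrite -lq mem_last.
Qed.

Lemma cover_exists (T : finType) (e : rel T) (v : T) :
  (forall y, connect e v y) -> exists k, ip_cover e v k.
Proof.
move=> Hc.
have : forall l : seq T, exists gs : seq (seq T),
   (forall g, g \in gs -> geodesic e g /\ end_vertex v g) /\
   (forall x, x \in l -> exists2 g, g \in gs & x \in g).
  elim=> [|x l [gs [H1 H2]]]; first by exists [::]; split.
  have [g [G1 [G2 G3]]] := geo_exists (Hc x).
  exists (g :: gs); split.
    by move=> g'; rewrite inE => /orP [/eqP ->|/H1].
  move=> y; rewrite inE => /orP [/eqP ->|/H2 [g' g'1 g'2]].
    by exists g; rewrite ?inE ?eqxx.
  by exists g' => //; rewrite inE g'1 orbT.
move=> /(_ (enum T)) [gs [H1 H2]].
exists (size gs), gs; split=> //; split=> // x; apply: H2; by rewrite mem_enum.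
Qed.

Lemma ip_spec (T : finType) (e : rel T) (v : T) :
  (exists k, ip_cover e v k) -> ip_cover e v (ip_number e v).
Proof.
move=> H; rewrite /ip_number; case: pselect => [h|//].
case: h => k hk /=.
by case: ex_minnP => m /asboolP.
Qed.

Lemma count_cover (T : finType) (gs : seq (seq T)) (A : {set T}) :
  (forall x, x \in A -> exists2 g, g \in gs & x \in g) ->
  (forall g u w, g \in gs -> u \in A -> w \in A -> u \in g -> w \in g -> u = w) ->
  #|A| <= size gs.
Proof.
elim: gs A => [|g gs IH] A Hc Hd.
  rewrite /= leqn0 cards_eq0; apply/eqP; apply/setP => x; rewrite inE.
  by apply/negP => /Hc [g].
have -> : A = (A :\: [set u | u \in g]) :|: (A :&: [set u | u \in g]).
  by rewrite setDE -setIUr setUC setUCr setIT.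
apply: leq_trans (leq_card_setU _ _) _.
rewrite /= -addn1; apply: leq_add; last first.
  case: (set_0Vmem (A :&: [set u | u \in g])) => [->|[u Hu]]; first by rewrite cards0.
  rewrite (_ : A :&: [set u | u \in g] = [set u]) ?cards1 //; apply/setP => w.
  rewrite !inE; apply/andP/eqP => [[wA wg]|->].
    move: Hu; rewrite !inE => /andP [uA ug].
    by apply: (Hd g) => //; rewrite inE eqxx.
  by move: Hu; rewrite !inE => /andP.
apply: IH.
  move=> x; rewrite !inE => /andP [xg /Hc [g' g'1 g'2]].
  move: g'1; rewrite inE => /orP [/eqP Eg|]; last by exists g'.
  by subst; rewrite g'2 in xg.
move=> g' u w g'1; rewrite !inE => /andP [_ uA] /andP [_ wA].
by apply: Hd => //; rewrite inE g'1 orbT.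
Qed.

Theorem theorem3p3 (T : finType) (e : rel T) :
  simple_connected_graph e ->
  (forall (R : {set T}) (v : T), gp_set_prop e R -> v \in R ->
     #|R| <= ip_number e v + 1) /\
  (forall v : T, gp_vertex e v -> gp_number e <= ip_number e v + 1).
Proof.
case=> _ _ Hconn.
have P1 : forall (R : {set T}) (v : T), gp_set_prop e R -> v \in R ->
     #|R| <= ip_number e v + 1.
  move=> R v Hgp vR.
  have [gs [Hs [Hg Hcov]]] := ip_spec (cover_exists (Hconn v)).
  rewrite (cardsD1 v R) vR addnC leq_add2r -Hs.
  apply: count_cover.
    by move=> x _; apply: Hcov.
  move=> g u w gin; rewrite !inE => /andP [uv uR] /andP [wv wR] ug wg.
  apply/eqP; apply/negP => /negP uw.
  have [Geo Ev] := Hg g gin.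
  have vg : v \in g.
    case: g {gin Geo ug wg} Ev => [//|x p] /= [->|<-]; first by rewrite inE eqxx.
    by rewrite mem_last.
  apply: (Hgp v u w vR uR wR); first by rewrite eq_sym.
    by [].
  by rewrite eq_sym.
  by exists g.
split=> // v [S [[HS HSn] vS]].
by rewrite -HSn; apply: P1.
Qed.
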